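(* Let $n>5f$ and consider an execution of the convergence algorithm described in the context, with at most $f$ Byzantine robots. Let $U(t)$ be the multiset of positions of the correct robots at time $t$. For every correct robot $i$ and every time $t$, $$range\big(trim^i_{2f}(P(t))\big) \subseteq range(U(t)),$$ where $range(S)=[\min S,\max S]$.
   Context: Setting: $n$ robots on the real line, of which at most $f$ are Byzantine (arbitrary positions) and $m\ge n-f$ are correct. Robots are anonymous, oblivious, have no common orientation, and have unlimited visibility with strong multiplicity detection. They operate in Look–Compute–Move cycles. Notation: $P(t)$ is the multiset of all $n$ positions at time $t$, sorted $P_1(t)\le\dots\le P_n(t)$. Let $x_i$ be the position of robot $i$. $trim^i_{2f}(P(t))$ is the multiset obtained from $P(t)$ by removing, among the $2f$ smallest positions, those strictly smaller than $x_i$, and, among the $2f$ largest positions, those strictly larger than $x_i$. Its minimum is $\min(x_i,P_{2f+1}(t))$ and its maximum is $\max(x_i,P_{n-2f}(t))$. The algorithm: robot $i$, after observing $P(t)$, is elected iff $x_i\le P_{f+1}(t)$ or $x_i\ge P_{n-f}(t)$. If elected, it moves toward the midpoint of $\min$ and $\max$ of $trim^i_{2f}(P(t))$; otherwise it does not move. *)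

(* Defs.v *)
From mathcomp Require Import all_boot all_order all_algebra.
Set Implicit Arguments. Unset Strict Implicit. Unset Printing Implicit Defensive.
Import Order.TTheory GRing.Theory Num.Theory.
Local Open Scope ring_scope.

Section Defs.
Variables (R : realFieldType) (n : nat).

Definition positions (p : 'I_n -> R) : seq R := [seq p j | j <- enum 'I_n].

Definition sortedP (p : 'I_n -> R) : seq R := sort <=%R (positions p).

(* P_k(t) with the paper's 1-based indexing. *)
Definition Pk (p : 'I_n -> R) (k : nat) : R := nth 0 (sortedP p) k.-1.

(* trim^i_{2f}(P): remove, among the 2f smallest positions, those strictly
   smaller than x, and among the 2f largest positions, those strictly
   larger than x. *)
Definition trim2f (f : nat) (p : 'I_n -> R) (x : R) : seq R :=
  let s := sortedP p in
  [seq nth 0 s j | j <- iota 0 n &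
     ~~ (((j < 2 * f)%N) && (nth 0 s j < x)) &&
     ~~ (((n - 2 * f <= j)%N) && (x < nth 0 s j))].

End Defs.

Definition seq_min (R : realFieldType) (s : seq R) : R :=
  foldr Order.min (head 0 s) s.
Definition seq_max (R : realFieldType) (s : seq R) : R :=
  foldr Order.max (head 0 s) s.

Definition range_sub (R : realFieldType) (S T : seq R) : Prop :=
  forall y : R, y \in `[seq_min S, seq_max S] -> y \in `[seq_min T, seq_max T].

(* Main.v *)
Require Import Defs.
From mathcomp Require Import all_boot all_order all_algebra.
Import Order.TTheory GRing.Theory Num.Theory.
Local Open Scope ring_scope.

Lemma cntB n (B : {set 'I_n}) : count (mem B) (enum 'I_n) = #|B|.
Proof. rewrite cardE -size_filter; congr size. by rewrite {2}/enum_mem -enumT. Qed.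

Lemma fmin_le (R : realFieldType) (h : R) s z : z \in s -> foldr Order.min h s <= z.
Proof.
elim: s => //= a s IH; rewrite in_cons => /orP [/eqP -> | zs].
  by rewrite ge_min lexx.
by rewrite ge_min IH ?orbT.
Qed.

Lemma fmax_ge (R : realFieldType) (h : R) s z : z \in s -> z <= foldr Order.max h s.
Proof.
elim: s => //= a s IH; rewrite in_cons => /orP [/eqP -> | zs].
  by rewrite le_max lexx.
by rewrite le_max IH ?orbT.
Qed.

Lemma fmin_mem (R : realFieldType) (h : R) s : foldr Order.min h s \in h :: s.
Proof.
elim: s => /= [|a s IH]; first by rewrite mem_head.
rewrite /Order.min; case: ifP => _; rewrite !in_cons ?eqxx ?orbT //.
move: IH; rewrite in_cons => /orP [->|->] //; by rewrite !orbT.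
Qed.

Lemma fmax_mem (R : realFieldType) (h : R) s : foldr Order.max h s \in h :: s.
Proof.
elim: s => /= [|a s IH]; first by rewrite mem_head.
rewrite /Order.max; case: ifP => _; rewrite !in_cons ?eqxx ?orbT //.
move: IH; rewrite in_cons => /orP [->|->] //; by rewrite !orbT.
Qed.

Lemma smin_mem (R : realFieldType) (s : seq R) : s != [::] -> seq_min s \in s.
Proof.
case: s => // a s _; have := @fmin_mem R a (a :: s).
by rewrite /seq_min /= in_cons => /orP [/eqP ->|]; rewrite ?mem_head.
Qed.

Lemma smax_mem (R : realFieldType) (s : seq R) : s != [::] -> seq_max s \in s.
Proof.
case: s => // a s _; have := @fmax_mem R a (a :: s).
by rewrite /seq_max /= in_cons => /orP [/eqP ->|]; rewrite ?mem_head.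
Qed.

Theorem lemma6 (R : realFieldType) (n f : nat) (B : {set 'I_n})
    (pos : R -> 'I_n -> R) :
  (5 * f < n)%N -> (#|B| <= f)%N ->
  forall (i : 'I_n) (t : R), i \notin B ->
    range_sub (trim2f f (pos t) (pos t i))
              [seq pos t j | j <- enum (~: B)].
Proof.
move=> hn hB i t iB.
set p := pos t; set x := p i.
set U := [seq p j | j <- enum (~: B)].
pose s := @Defs.sortedP R n p.
set m := seq_min U; set M := seq_max U.
have hs : sorted <=%R s by apply: sort_sorted; exact: le_total.
have hsz : size s = n by rewrite /s /Defs.sortedP size_sort size_map size_enum_ord.
have hcnt : forall a : pred R, count a s = count (fun j => a (p j)) (enum 'I_n).
  by move=> a; rewrite /s /Defs.sortedP (permP (permEl (perm_sort _ _))) /positions count_map.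
have hU : forall j, j \notin B -> p j \in U.
  by move=> j jB; rewrite /U map_f // mem_enum in_setC.
have hmU : forall j, j \notin B -> m <= p j by move=> j /hU; apply: fmin_le.
have hMU : forall j, j \notin B -> p j <= M by move=> j /hU; apply: fmax_ge.
have hnth : forall a b, (a <= b)%N -> (b < n)%N -> nth 0 s a <= nth 0 s b.
  move=> a b ab bn; apply: le_sorted_leq_nth => //; rewrite inE hsz //.
  exact: leq_ltn_trans bn.
have low : forall k, (#|B| <= k)%N -> (k < n)%N -> m <= nth 0 s k.
  move=> k Bk kn; rewrite leNgt; apply/negP => hk.
  have c1 : (k.+1 <= count (fun y : R => (y < m)%R) s)%N.
    rewrite -(cat_take_drop k.+1 s) count_cat.
    have -> : count (fun y : R => (y < m)%R) (take k.+1 s) = k.+1.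
      have H : all (fun y : R => (y < m)%R) (take k.+1 s).
        apply/(all_nthP 0) => l; rewrite size_takel ?hsz // => lk.
        rewrite nth_take //; apply: le_lt_trans hk; apply: hnth => //.
      move: H; rewrite all_count => /eqP ->.
      by rewrite size_takel ?hsz.
    exact: leq_addr.
  have c2 : (count (fun y : R => (y < m)%R) s <= #|B|)%N.
    rewrite hcnt -cntB; apply: sub_count => j /= hj.
    by apply/negPn/negP => /hmU; rewrite leNgt hj.
  have := leq_trans c1 c2; rewrite ltnNge Bk //.
have upp : forall k, (k + #|B| < n)%N -> nth 0 s k <= M.
  move=> k kn; rewrite leNgt; apply/negP => hk.
  have c1 : (n - k <= count (fun y : R => (M < y)%R) s)%N.
    rewrite -(cat_take_drop k s) count_cat.
    have -> : count (fun y : R => (M < y)%R) (drop k s) = (n - k)%N.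
      have H : all (fun y : R => (M < y)%R) (drop k s).
        apply/(all_nthP 0) => l; rewrite size_drop hsz => lk.
        rewrite nth_drop; apply: (lt_le_trans hk); apply: hnth; first exact: leq_addr.
        by rewrite -ltn_subRL.
      move: H; rewrite all_count => /eqP ->.
      by rewrite size_drop hsz.
    exact: leq_addl.
  have c2 : (count (fun y : R => (M < y)%R) s <= #|B|)%N.
    rewrite hcnt -cntB; apply: sub_count => j /= hj.
    by apply/negPn/negP => /hMU; rewrite leNgt hj.
  have := leq_trans c1 c2; rewrite leqNgt ltn_subRL kn //.
have xm : m <= x by apply: hmU.
have xM : x <= M by apply: hMU.
have hT : forall z, z \in trim2f f p x -> m <= z <= M.
  move=> z /mapP [j]; rewrite mem_filter mem_iota add0n => /andP [hc /andP [_ jn]] ->.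
  move: hc => /= /andP [c1 c2].
  rewrite -/s in c1 c2 *.
  apply/andP; split.
    case: (ltnP j (2 * f)) c1 => /= hj c1.
      by move: c1; rewrite -leNgt; apply: le_trans.
    by apply: low => //; apply: leq_trans hB _; apply: leq_trans _ hj; rewrite leq_pmull.
  case: (leqP (n - 2 * f) j) c2 => /= hj c2.
    by move: c2; rewrite -leNgt => h; apply: le_trans h xM.
  apply: upp; rewrite addnC -ltn_subRL; apply: leq_trans hj _.
  apply: leq_sub2l; apply: leq_trans hB _; rewrite leq_pmull //.
have xT : x \in trim2f f p x.
  have : x \in s by rewrite /s /Defs.sortedP mem_sort /positions map_f // mem_enum.
  move=> xs; have ji := index_mem x s; rewrite xs hsz in ji.
  apply/mapP; exists (index x s); last by rewrite nth_index.
  by rewrite mem_filter mem_iota add0n ji nth_index // ltxx !andbF.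
have Tne : trim2f f p x != [::] by apply/eqP => h; rewrite h in xT.
move=> y; rewrite !in_itv /= => /andP [h1 h2].
have /hT/andP [a1 _] := @smin_mem R _ Tne.
have /hT/andP [_ a2] := @smax_mem R _ Tne.
by rewrite (le_trans a1 h1) (le_trans h2 a2).
Qed.
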